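(* If $H$ is a convex subgraph of a graph $G$, then $\chi_{\mu_k}(G)\ge \chi_{\mu_k}(H)$ for every positive integer $k$.
   Context: A subgraph $H$ of $G$ is convex if for all $x,y\in V(H)$, every $x,y$-geodesic (shortest path) of $G$ lies entirely in $H$. For a positive integer $k$, a set $M\subseteq V(G)$ is a $k$-distance mutual-visibility set if for every two vertices $u,v\in M$ there exists a $u,v$-geodesic of length at most $k$ none of whose internal vertices lies in $M$. $\chi_{\mu_k}(G)$ is the minimum cardinality of a partition of $V(G)$ into $k$-distance mutual-visibility sets. *)

(* Defs.v *)
From mathcomp Require Import all_boot.
From mathcomp Require Import boolp.
Set Implicit Arguments. Unset Strict Implicit. Unset Printing Implicit Defensive.

(* A (sub)graph is given by a vertex set V : {set T} and an edge relation
   r : rel T on a finite type T.  A graph G on T is ([set: T], e). *)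
Section Graphs.
Variable T : finType.

(* x :: p is a walk from x to y in the graph (V, r); its length is size p. *)
Definition walk (V : {set T}) (r : rel T) (x y : T) (p : seq T) : bool :=
  [&& path r x p, last x p == y & all (fun z => z \in V) (x :: p)].

Definition geodesic (V : {set T}) (r : rel T) (x y : T) (p : seq T) : Prop :=
  walk V r x y p /\ forall q, walk V r x y q -> size p <= size q.

Definition internal (x : T) (p : seq T) : seq T := behead (belast x p).

Definition kdmv_set (V : {set T}) (r : rel T) (k : nat) (M : {set T}) : Prop :=
  forall u v, u \in M -> v \in M ->
    exists p, [/\ geodesic V r u v p, size p <= k &
                  forall w, w \in internal u p -> w \notin M].

Definition kdmv_partition (V : {set T}) (r : rel T) (k : nat)
    (P : {set {set T}}) : Prop :=
  partition P V /\ forall B, B \in P -> kdmv_set V r k B.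

(* chi_{mu_k} : the minimum cardinality of such a partition.  The default
   value #|V| is attained by the partition into singletons, so it does not
   affect the minimum. *)
Definition chi_mu (V : {set T}) (r : rel T) (k : nat) : nat :=
  \big[minn/#|V|]_(P : {set {set T}} | `[< kdmv_partition V r k P >]) #|P|.

Definition subgraph (e : rel T) (VH : {set T}) (eH : rel T) : Prop :=
  symmetric eH /\ forall x y, eH x y -> [&& x \in VH, y \in VH & e x y].

Definition convex_subgraph (e : rel T) (VH : {set T}) (eH : rel T) : Prop :=
  subgraph e VH eH /\
  forall x y, x \in VH -> y \in VH ->
    forall p, geodesic [set: T] e x y p -> walk VH eH x y p.

End Graphs.

(* Main.v *)
Require Import Defs.
From mathcomp Require Import all_boot.
From mathcomp Require Import boolp.

Set Implicit Arguments. Unset Strict Implicit. Unset Printing Implicit Defensive.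

Lemma geoH (T : finType) (e : rel T) (VH : {set T}) (eH : rel T) u v p :
  convex_subgraph e VH eH -> u \in VH -> v \in VH ->
  geodesic [set: T] e u v p -> geodesic VH eH u v p.
Proof.
move=> [[_ sub] conv] uV vV g; split; first exact: conv g.
move=> q /and3P[pq lq _]; apply: g.2; apply/and3P; split=> //.
- by apply: sub_path pq => x y /sub /and3P[].
- by apply/allP=> z _; rewrite inE.
Qed.

Lemma chi_le_card (T : finType) (V : {set T}) r k : chi_mu V r k <= #|V|.
Proof.
rewrite /chi_mu; apply: (big_rec (fun m => m <= #|V|)) => // i m _ hm.
exact: leq_trans (geq_minr _ _) hm.
Qed.

Lemma bigmin_le (I : eqType) (s : seq I) (Pr : pred I) (F : I -> nat) x j :
  j \in s -> Pr j -> \big[minn/x]_(i <- s | Pr i) F i <= F j.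
Proof.
elim: s => // a s IH; rewrite inE big_cons => /orP[/eqP <- ->|js pj].
  exact: geq_minl.
case: (Pr a); last exact: IH.
exact: leq_trans (geq_minr _ _) (IH js pj).
Qed.

Lemma chi_le_part (T : finType) (V : {set T}) r k P :
  kdmv_partition V r k P -> chi_mu V r k <= #|P|.
Proof.
move=> h; rewrite /chi_mu; apply: bigmin_le; first exact: mem_index_enum.
exact: asboolT.
Qed.

Theorem proposition2p5 (T : finType) (e : rel T)
  (e_sym : symmetric e) (e_irr : irreflexive e)
  (VH : {set T}) (eH : rel T) (k : nat) :
  convex_subgraph e VH eH -> 0 < k ->
  chi_mu VH eH k <= chi_mu [set: T] e k.
Proof.
move=> cvx _.
rewrite {2}/chi_mu; apply: (big_ind (fun m => chi_mu VH eH k <= m)).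
- by rewrite cardsT; apply: leq_trans (chi_le_card _ _ _) (max_card _).
- by move=> x y hx hy; rewrite leq_min hx hy.
move=> P /asboolP [partP kP].
have covP := cover_partition partP.
set P' := preim_partition (pblock P) VH.
apply: leq_trans (chi_le_part (k := k) (r := eH) (P := P') _) _.
  split; first exact: preim_partitionP.
  move=> B /imsetP[x xV ->] u v; rewrite !inE => /andP[uV /eqP hu] /andP[vV /eqP hv].
  have uc : u \in cover P by rewrite covP inE.
  have vc : v \in cover P by rewrite covP inE.
  have BP := pblock_mem uc.
  have ub : u \in pblock P u by rewrite mem_pblock.
  have vb : v \in pblock P u by rewrite -hu hv mem_pblock.
  have [p [g sp hin]] := kP _ BP u v ub vb.
  exists p; split=> //; first exact: geoH g.
  move=> w /hin wn; rewrite inE; apply/negP => /andP[wV /eqP hw].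
  have wc : w \in cover P by rewrite covP inE.
  by move: wn; rewrite -hu hw mem_pblock wc.
have -> : P' = [set [set y in VH | B == pblock P y] | B in [set pblock P x | x in VH]].
  by rewrite -imset_comp.
apply: leq_trans (leq_imset_card _ _) _; apply: subset_leq_card.
apply/subsetP=> B /imsetP[x _ ->]; apply: pblock_mem; by rewrite covP inE.
Qed.
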